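(* Let $G_3$ be the graph with vertices $v_1,\dots,v_8$ and edges $a_1=v_1v_2$, $a_2=v_2v_3$, $a_3=v_3v_4$, $a_4=v_4v_5$, $a_5=v_1v_5$, $a_6=v_1v_8$, $a_7=v_2v_6$, $a_8=v_3v_6$, $a_9=v_4v_7$, $a_{10}=v_5v_8$, $a_{11}=v_6v_7$, $a_{12}=v_7v_8$. Let $\gamma_1=e_1+e_3+e_{10}+e_{11}$, $\gamma_2=e_2+e_4+e_6+e_{11}$, $\gamma_3=e_3+e_5+e_7+e_{12}$, $\gamma_4=e_2+e_5+e_6+e_7+e_8+2e_9+e_{10}$, $\gamma_5=e_2+e_3+e_5+e_6+e_7+e_9+e_{10}+e_{11}$ in $\mathbb{R}^{12}$. Then any $\gamma\in S_{\mathbb{R}}(G_3)$ can be uniquely written as $\gamma=k_1\gamma_1+k_2\gamma_2+k_3\gamma_3+k_4\gamma_4+k_5\gamma_5$ with $k_1,\dots,k_5\in\mathbb{R}$. Moreover, $\gamma\in S(G_3)$ if and only if each of the numbers $k_1,\ k_2,\ k_3,\ k_4,\ k_1+k_2+k_5,\ k_1+k_3+k_5,\ k_1+k_4+k_5,\ k_2+k_4+k_5,\ k_3+k_4+k_5,\ 2k_4+k_5$ belongs to $\mathbb{N}$. Consequently, for $\gamma\in S(G_3)$ one has $k_5\in\mathbb{Z}$.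
   Context: For a finite graph $G$ with edges $a_1,\dots,a_n$, $S_{\mathbb{R}}(G)$ is the set of vectors $(\alpha_1,\dots,\alpha_n)\in\mathbb{R}^n$ (real labels $\alpha_i$ on edges $a_i$) such that for every vertex $v$ the sum of the labels of the edges incident to $v$ is the same number $s$ for all vertices; it is a real vector space. A magic labelling is an element of $S(G)=S_{\mathbb{R}}(G)\cap\mathbb{N}^n$. $e_i$ is the $i$-th unit vector of $\mathbb{R}^n$, $\mathbb{N}=\{0,1,2,\dots\}$. *)

(* Defs.v *)
From HB Require Import structures.
From mathcomp Require Import all_boot all_order all_algebra.
From mathcomp Require Import reals.
Set Implicit Arguments. Unset Strict Implicit. Unset Printing Implicit Defensive.
Import Order.TTheory GRing.Theory Num.Theory.
Local Open Scope ring_scope.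

(* Edges a_1..a_12 of G_3 (stored at indices 0..11), as pairs of vertex
   numbers in 1..8 (v_1..v_8). *)
Definition G3_edges : seq (nat * nat) :=
  [:: (1,2); (2,3); (3,4); (4,5); (1,5); (1,8);
      (2,6); (3,6); (4,7); (5,8); (6,7); (7,8)]%N.

(* Vertex v : 'I_8 stands for v_(v+1); edge i : 'I_12 stands for a_(i+1). *)
Definition incident (v : 'I_8) (i : 'I_12) : bool :=
  let e := nth (0%N, 0%N) G3_edges i in (v.+1 == e.1) || (v.+1 == e.2).

Definition in_SR (R : realType) (x : 'rV[R]_12) : Prop :=
  exists s : R, forall v : 'I_8, \sum_(i < 12 | incident v i) x 0 i = s.

Definition in_S (R : realType) (x : 'rV[R]_12) : Prop :=
  in_SR x /\ forall i : 'I_12, x 0 i \is a Num.nat.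

(* Coefficients of gamma_1..gamma_5 (index j : 'I_5 stands for gamma_(j+1)). *)
Definition gamma_coeffs : seq (seq nat) :=
  [:: [:: 1; 0; 1; 0; 0; 0; 0; 0; 0; 1; 1; 0];
      [:: 0; 1; 0; 1; 0; 1; 0; 0; 0; 0; 1; 0];
      [:: 0; 0; 1; 0; 1; 0; 1; 0; 0; 0; 0; 1];
      [:: 0; 1; 0; 0; 1; 1; 1; 1; 2; 1; 0; 0];
      [:: 0; 1; 1; 0; 1; 1; 1; 0; 1; 1; 1; 0]]%N.

Definition gamma (R : realType) (j : 'I_5) : 'rV[R]_12 :=
  \row_(i < 12) (nth 0%N (nth [::] gamma_coeffs j) i)%:R.

(* k_1 gamma_1 + ... + k_5 gamma_5, with k_(j+1) = k 0 j. *)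
Definition comb (R : realType) (k : 'rV[R]_5) : 'rV[R]_12 :=
  \sum_(j < 5) k 0 j *: gamma R j.

(* Main.v *)
Require Import Defs.
From HB Require Import structures.
From mathcomp Require Import all_boot all_order all_algebra.
From mathcomp Require Import reals.
From mathcomp Require Import lra.
Import Order.TTheory GRing.Theory Num.Theory.
Local Open Scope ring_scope.

Lemma sum_inord {R : realType} n (F : 'I_n.+1 -> R) :
  \sum_(i < n.+1) F i = \sum_(0 <= i < n.+1) F (inord i).
Proof. by rewrite big_mkord; apply: eq_bigr => i _; congr F; apply/val_inj; rewrite /= inordK. Qed.

Lemma combE {R : realType} (k : 'rV[R]_5) (i : 'I_12) :
  comb k 0 i = \sum_(0 <= j < 5) k 0 (inord j) * (nth 0%N (nth [::] gamma_coeffs j) i)%:R.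
Proof. rewrite /comb summxE sum_inord; apply: eq_big_nat => j /andP[_ Hj]; by rewrite !mxE inordK. Qed.

Definition eqs {R : realType} (g : 'rV[R]_12) (k : 'rV[R]_5) : Prop :=
  let x n := g 0 (inord n) in let c n := k 0 (inord n) in
  [/\ [/\ x 0%N = c 0%N, x 1%N = c 1%N + c 3%N + c 4%N, x 2%N = c 0%N + c 2%N + c 4%N,
       x 3%N = c 1%N & x 4%N = c 2%N + c 3%N + c 4%N],
      [/\ x 5%N = c 1%N + c 3%N + c 4%N, x 6%N = c 2%N + c 3%N + c 4%N, x 7%N = c 3%N,
       x 8%N = 2 * c 3%N + c 4%N & x 9%N = c 0%N + c 3%N + c 4%N]
    & x 10%N = c 0%N + c 1%N + c 4%N /\ x 11%N = c 2%N].

Lemma eqsP {R : realType} (g : 'rV[R]_12) (k : 'rV[R]_5) : g = comb k <-> eqs g k.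
Proof.
split.
  move=> ->; rewrite /eqs !combE unlock /= !inordK //=. split; split; lra.
move=> [[e0 e1 e2 e3 e4] [e5 e6 e7 e8 e9] [e10 e11]].
apply/rowP => i; rewrite -(inord_val i) combE.
case: i => n /= Hn; rewrite unlock /= inordK //.
do 12! (case: n Hn => [|n] Hn; first (rewrite /= ?e0 ?e1 ?e2 ?e3 ?e4 ?e5 ?e6 ?e7 ?e8 ?e9 ?e10 ?e11; lra)).
by [].
Qed.

Lemma SReqs {R : realType} (g : 'rV[R]_12) : in_SR g ->
  let x n := g 0 (inord n) in
  exists s, [/\ x 0%N + x 4%N + x 5%N = s, x 0%N + x 1%N + x 6%N = s,
     x 1%N + x 2%N + x 7%N = s, x 2%N + x 3%N + x 8%N = s &
   [/\ x 3%N + x 4%N + x 9%N = s, x 6%N + x 7%N + x 10%N = s,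
     x 8%N + x 10%N + x 11%N = s & x 5%N + x 9%N + x 11%N = s]].
Proof.
move=> [s H] x; exists s.
have F v : \sum_(i < 12 | incident (inord v) i) g 0 i = s := H (inord v).
have := F 0%N; rewrite big_mkcond sum_inord unlock /= /incident /= !inordK //= => h0.
have := F 1%N; rewrite big_mkcond sum_inord unlock /= /incident /= !inordK //= => h1.
have := F 2%N; rewrite big_mkcond sum_inord unlock /= /incident /= !inordK //= => h2.
have := F 3%N; rewrite big_mkcond sum_inord unlock /= /incident /= !inordK //= => h3.
have := F 4%N; rewrite big_mkcond sum_inord unlock /= /incident /= !inordK //= => h4.
have := F 5%N; rewrite big_mkcond sum_inord unlock /= /incident /= !inordK //= => h5.
have := F 6%N; rewrite big_mkcond sum_inord unlock /= /incident /= !inordK //= => h6.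
have := F 7%N; rewrite big_mkcond sum_inord unlock /= /incident /= !inordK //= => h7.
rewrite /x; split; [lra|lra|lra|lra|split; lra].
Qed.

Lemma o5 : [/\ (0 : 'I_5) = inord 0, (1 : 'I_5) = inord 1, (2 : 'I_5) = inord 2,
  (3 : 'I_5) = inord 3 & (4 : 'I_5) = inord 4].
Proof. by split; apply/val_inj; rewrite /= inordK. Qed.

Lemma nat_int {R : realType} (x : R) : x \is a Num.nat -> x \is a Num.int.
Proof. by rewrite natrEint => /andP[]. Qed.

Theorem mainTheorem5 (R : realType) :
  (forall g : 'rV[R]_12, in_SR g -> exists! k : 'rV[R]_5, g = comb k) /\
  (forall (g : 'rV[R]_12) (k : 'rV[R]_5), in_SR g -> g = comb k ->
     let k1 := k 0 0 in let k2 := k 0 1 in let k3 := k 0 2 in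
     let k4 := k 0 3 in let k5 := k 0 4 in
     (in_S g <->
       (k1 \is a Num.nat /\ k2 \is a Num.nat /\ k3 \is a Num.nat /\
        k4 \is a Num.nat /\ k1 + k2 + k5 \is a Num.nat /\
        k1 + k3 + k5 \is a Num.nat /\ k1 + k4 + k5 \is a Num.nat /\
        k2 + k4 + k5 \is a Num.nat /\ k3 + k4 + k5 \is a Num.nat /\
        2 * k4 + k5 \is a Num.nat))) /\
  (forall (g : 'rV[R]_12) (k : 'rV[R]_5), in_S g -> g = comb k ->
     k 0 4 \is a Num.int).
Proof.
have [-> -> -> -> ->] := o5.
split; [|split].
- move=> g /SReqs [s [h0 h1 h2 h3 [h4 h5 h6 h7]]].
  pose x n := g 0 (inord n).
  pose k : 'rV[R]_5 := \row_(j < 5) nth 0 [:: x 0%N; x 3%N; x 11%N; x 7%N; x 8%N - 2 * x 7%N] j.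
  have kE n : (n < 5)%N -> k 0 (inord n) = nth 0 [:: x 0%N; x 3%N; x 11%N; x 7%N; x 8%N - 2 * x 7%N] n.
    by move=> Hn; rewrite mxE inordK.
  exists k; split.
    apply/eqsP; rewrite /eqs !kE //= /x; split; split; lra.
  move=> k' /eqsP [[e0 e1 e2 e3 e4] [e5 e6 e7 e8 e9] [e10 e11]].
  apply/rowP => i; rewrite -(inord_val i) kE //=.
  case: i => n /= Hn; rewrite /x.
  do 5! (case: n Hn => [|n] Hn; first by rewrite /=; lra).
  by [].
- move=> g k HS /eqsP [[e0 e1 e2 e3 e4] [e5 e6 e7 e8 e9] [e10 e11]] /=.
  split.
    move=> [_ N].
    have : k 0 (inord 0) + k 0 (inord 1) + k 0 (inord 4) \is a Num.nat by rewrite -e10.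
    have : k 0 (inord 0) + k 0 (inord 2) + k 0 (inord 4) \is a Num.nat by rewrite -e2.
    have : k 0 (inord 0) + k 0 (inord 3) + k 0 (inord 4) \is a Num.nat by rewrite -e9.
    have : k 0 (inord 1) + k 0 (inord 3) + k 0 (inord 4) \is a Num.nat by rewrite -e1.
    have : k 0 (inord 2) + k 0 (inord 3) + k 0 (inord 4) \is a Num.nat by rewrite -e4.
    have : 2 * k 0 (inord 3) + k 0 (inord 4) \is a Num.nat by rewrite -e8.
    rewrite -e0 -e3 -e11 -e7 !N.
    by move=> *; do !split.
  move=> [n0 [n1 [n2 [n3 [n4 [n5 [n6 [n7 [n8 n9]]]]]]]]].
  split => // i; rewrite -(inord_val i); case: i => n /= Hn.
  do 12! (case: n Hn => [|n] Hn; first by rewrite ?e0 ?e1 ?e2 ?e3 ?e4 ?e5 ?e6 ?e7 ?e8 ?e9 ?e10 ?e11).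
  by [].
- move=> g k [_ N] /eqsP [[e0 e1 e2 e3 e4] [e5 e6 e7 e8 e9] [e10 e11]].
  have -> : k 0 (inord 4) = g 0 (inord 8) - 2 * g 0 (inord 7) by lra.
  by rewrite rpredB ?rpredM ?nat_int ?N // (natr_int _ 2).
Qed.
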